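(* Let $\eta$ be a formal differential operator on $\mathcal{P}_c$, $\eta(y)=\sum_{k=0}^\infty M_k y^{(k)}$, where each $M_k$ is a complex polynomial with $\deg M_k\le k$ ($M_0$ a constant); for $k\in\mathbb{N}$ write $M_k=m_{kk}x^k+R_{k-1}$ with $\deg R_{k-1}\le k-1$. Let $d=(d_j)_{j\in\mathbb{N}_0}$ be a sequence of complex scalars, let $n\in\mathbb{N}$, and assume $d_n-d_0=\sum_{k=1}^n p(n,k)\,m_{kk}$. Assume that there are polynomials $p_0\equiv 1,p_1,\dots,p_{n-1}$ with $\deg p_r=r$ and $\eta p_r=d_rp_r$ for $0\le r\le n-1$. Let $(\alpha_j^{n-1})_{j=0}^{n-1}$ be the scalars with $\sum_{k=1}^n p(n,k)R_{k-1}x^{n-k}=\sum_{j=0}^{n-1}\alpha_j^{n-1}p_j$. Then there exists a polynomial $p_n=x^n+q_{n-1}$ with $\deg q_{n-1}\le n-1$ and $\eta p_n=d_np_n$ if and only if there exists an $n$-tuple of scalars $(\beta_j^{n-1})_{j=0}^{n-1}$ such that $(d_n-d_j)\beta_j^{n-1}=\alpha_j^{n-1}$ for all $0\le j\le n-1$.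
   Context: $\mathcal{P}_c$ is the space of polynomials in one real variable with complex coefficients; $y^{(k)}$ is the $k$-th derivative. For $n\in\mathbb{N}$ and $1\le r\le n$, $p(n,r)=\frac{n!}{(n-r)!}$. *)

(* Defs.v *)
(* Complex numbers: R[i] = complex R for R : realType
   (with R the real numbers this is C). *)
From HB Require Import structures.
From mathcomp Require Import all_boot all_order all_algebra.
From mathcomp Require Import complex.
From mathcomp Require Import reals.
Set Implicit Arguments. Unset Strict Implicit. Unset Printing Implicit Defensive.
Import Order.TTheory GRing.Theory Num.Theory.
Local Open Scope ring_scope.

(* The formal differential operator eta(y) = sum_k M_k y^(k); on a
   polynomial y only the terms k < size y (i.e. k <= deg y) are nonzero. *)
Definition diffop (C : nzRingType) (M : nat -> {poly C}) (y : {poly C}) : {poly C} :=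
  \sum_(k < size y) M k * y^`(k).

Definition mkk (C : nzRingType) (M : nat -> {poly C}) (k : nat) : C := (M k)`_k.

Definition Rk (C : nzRingType) (M : nat -> {poly C}) (k : nat) : {poly C} :=
  M k - (mkk M k) *: 'X^k.

Definition pnr (n r : nat) : nat := n ^_ r.

(* Main.v *)
Require Import Defs.
From HB Require Import structures.
From mathcomp Require Import all_boot all_order all_algebra.
From mathcomp Require Import complex.
From mathcomp Require Import reals.
From mathcomp Require Import ring.
Import Order.TTheory GRing.Theory Num.Theory.
Local Open Scope ring_scope.

Section Gen.
Variable F : fieldType.

Definition DN (M : nat -> {poly F}) (N : nat) (y : {poly F}) : {poly F} :=
  \sum_(k < N) M k * y^`(k).

Lemma diffop_DN (M : nat -> {poly F}) N (y : {poly F}) : (size y <= N)%N -> diffop M y = DN M N y.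
Proof.
move=> H; rewrite /diffop /DN (big_ord_widen N (fun k => M k * y^`(k)) H).
rewrite big_mkcond; apply: eq_bigr => k _; case: ifP => // /negbT.
by rewrite -leqNgt => h; rewrite derivn_poly0 // mulr0.
Qed.

Lemma DN_add (M : nat -> {poly F}) N (y z : {poly F}) : DN M N (y + z) = DN M N y + DN M N z.
Proof. by rewrite /DN -big_split; apply: eq_bigr => k _; rewrite derivnD mulrDr. Qed.

Lemma DN_lin (M : nat -> {poly F}) N (p : nat -> {poly F}) (b : nat -> F) m :
  DN M N (\sum_(j < m) b j *: p j) = \sum_(j < m) b j *: DN M N (p j).
Proof.
rewrite /DN.
under eq_bigr do rewrite raddf_sum mulr_sumr.
rewrite exchange_big; apply: eq_bigr => j _; rewrite scaler_sumr.
apply: eq_bigr => k _; by rewrite /= derivnZ scalerAr.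
Qed.

Lemma coef_comb (p : nat -> {poly F}) (c : nat -> F) m i :
  (forall r, (r < m)%N -> size (p r) = r.+1) -> (m <= i)%N ->
  (\sum_(j < m) c j *: p j)`_i = 0.
Proof.
move=> Hs Hi; rewrite coef_sum big1 // => j _; rewrite coefZ.
have := ltn_ord j => hj.
by rewrite (leq_sizeP _ _ (eq_leq (Hs _ hj))) ?mulr0 // (leq_trans hj Hi).
Qed.

Lemma size_comb (p : nat -> {poly F}) (c : nat -> F) m :
  (forall r, (r < m)%N -> size (p r) = r.+1) ->
  (size (\sum_(j < m) c j *: p j)%R <= m)%N.
Proof. by move=> Hs; apply/leq_sizeP => i hi; exact (coef_comb p c m i Hs hi). Qed.

Lemma lead_nz (p : nat -> {poly F}) m : size (p m) = m.+1 -> (p m)`_m != 0.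
Proof.
move=> Hs; have -> : (p m)`_m = lead_coef (p m) by rewrite lead_coefE Hs.
by rewrite lead_coef_eq0 -size_poly_eq0 Hs.
Qed.

Lemma indep (p : nat -> {poly F}) m :
  (forall r, (r < m)%N -> size (p r) = r.+1) ->
  forall c : nat -> F, \sum_(j < m) c j *: p j = 0 -> forall j, (j < m)%N -> c j = 0.
Proof.
elim: m => [|m IH] Hs c H j hj //.
have Hs' : forall r, (r < m)%N -> size (p r) = r.+1 by move=> r hr; apply: Hs; exact: ltnW.
rewrite big_ord_recr /= in H.
have cm : c m = 0.
  have := congr1 (fun q : {poly F} => q`_m) H; rewrite coefD coef_comb // coefZ add0r coef0.
  by move/eqP; rewrite mulf_eq0 (negbTE (lead_nz p m (Hs _ (ltnSn m)))) orbF => /eqP.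
move: H; rewrite cm scale0r addr0 => H.
move: hj; rewrite ltnS leq_eqVlt => /orP [/eqP -> //|hjm]; exact: IH.
Qed.

Lemma span (p : nat -> {poly F}) m :
  (forall r, (r < m)%N -> size (p r) = r.+1) ->
  forall q : {poly F}, (size q <= m)%N -> exists c : nat -> F, q = \sum_(j < m) c j *: p j.
Proof.
elim: m => [|m IH] Hs q Hq.
  exists (fun _ => 0); rewrite big_ord0; exact/size_poly_leq0P.
have Hs' : forall r, (r < m)%N -> size (p r) = r.+1 by move=> r hr; apply: Hs; exact: ltnW.
have Hm := Hs _ (ltnSn m).
set a := q`_m / (p m)`_m.
have : (size (q - a *: p m)%R <= m)%N.
  apply/leq_sizeP => i hi; rewrite coefB coefZ.
  case: (ltngtP i m) hi => // [hmi _|-> _].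
    by rewrite !(leq_sizeP _ _ (_ : (_ <= m.+1)%N)) ?mulr0 ?subr0 // Hm.
  by rewrite /a divfK ?subrr // (lead_nz p m Hm).
case/IH => // c Hc.
exists (fun j => if j == m then a else c j).
rewrite big_ord_recr /= eqxx.
have -> : \sum_(i < m) (if (i : nat) == m then a else c i) *: p i = \sum_(i < m) c i *: p i.
  by apply: eq_bigr => i _; rewrite ltn_eqF.
by rewrite -Hc subrK.
Qed.

End Gen.
Arguments DN {F}.
Arguments diffop_DN {F}.
Arguments DN_add {F}.
Arguments DN_lin {F}.
Arguments coef_comb {F}.
Arguments size_comb {F}.
Arguments lead_nz {F}.
Arguments indep {F}.
Arguments span {F}.

Theorem proposition1 (R : realType) (M : nat -> {poly R[i]})
  (d : nat -> R[i]) (n : nat) (p : nat -> {poly R[i]}) (alpha : nat -> R[i]) :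
  (forall k, (size (M k) <= k.+1)%N) ->
  (0 < n)%N ->
  d n - d 0%N = \sum_(1 <= k < n.+1) (pnr n k)%:R * mkk M k ->
  p 0%N = 1 ->
  (forall r, (r < n)%N -> size (p r) = r.+1) ->
  (forall r, (r < n)%N -> diffop M (p r) = d r *: p r) ->
  \sum_(1 <= k < n.+1) (pnr n k)%:R *: (Rk M k * 'X^(n - k))
    = \sum_(j < n) alpha j *: p j ->
  (exists q : {poly R[i]}, (size q <= n)%N /\
     diffop M ('X^n + q) = d n *: ('X^n + q))
  <->
  (exists beta : nat -> R[i], forall j, (j < n)%N -> (d n - d j) * beta j = alpha j).
Proof.
move=> _ n0 Hd p0 Hs Heig Halpha.
have M0 : M 0%N = (d 0%N)%:P.
  have := Heig 0%N n0; rewrite p0 /diffop size_poly1 big_ord1 derivn0 mulr1 => ->.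
  by rewrite alg_polyC.
have Dp : forall j, (j < n)%N -> DN M n.+1 (p j) = d j *: p j.
  by move=> j hj; rewrite -diffop_DN -?Heig // Hs // ltnS ltnW.
have DX : DN M n.+1 'X^n = d n *: 'X^n + \sum_(j < n) alpha j *: p j.
  rewrite /DN big_ord_recl.
  have -> : M (@ord0 n) * ('X^n)^`(@ord0 n) = (d 0%N)%:P * 'X^n by rewrite derivn0 M0.
  rewrite -Halpha big_add1 /= big_mkord.
  have -> : d n = d 0%N + \sum_(1 <= k < n.+1) (pnr n k)%:R * mkk M k.
    by rewrite -Hd addrC subrK.
  rewrite big_add1 /= big_mkord scalerDl mul_polyC -addrA; congr (_ + _).
  rewrite scaler_suml -big_split; apply: eq_bigr => k _.
  have -> : M (bump 0 k) * (('X^n)^`(0 + k))^`() = M k.+1 * ('X^n)^`(k.+1) by []. rewrite derivnXn [in RHS]/= mulrnAr -scalerA -scalerDr scaler_nat /pnr; congr (_ *+ _).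
  rewrite -[M k.+1](subrK (mkk M k.+1 *: 'X^(k.+1))) -/(Rk M k.+1) mulrDl addrC.
  by rewrite -scalerAl -exprD subnKC.

have key : forall b : nat -> R[i],
   DN M n.+1 ('X^n + \sum_(j < n) b j *: p j) - d n *: ('X^n + \sum_(j < n) b j *: p j)
   = \sum_(j < n) (alpha j - (d n - d j) * b j) *: p j.
  move=> b; rewrite DN_add DN_lin DX.
  have -> : \sum_(j < n) b j *: DN M n.+1 (p j) = \sum_(j < n) (b j * d j) *: p j.
    by apply: eq_bigr => j _; rewrite Dp // scalerA.
  rewrite scalerDr scaler_sumr.
  have -> : \sum_(j < n) (alpha j - (d n - d j) * b j) *: p j =
     \sum_(j < n) alpha j *: p j + \sum_(j < n) (b j * d j) *: p j
      - \sum_(j < n) d n *: (b j *: p j).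
    rewrite -big_split -sumrB; apply: eq_bigr => j _ /=.
    by rewrite scalerA -!scalerDl -scalerBl; congr (_ *: _); ring.
  by rewrite opprD; ring.
have sz : forall q : {poly R[i]}, (size q <= n)%N -> (size ('X^n + q)%R <= n.+1)%N.
  move=> q hq; apply/leq_sizeP => i hi.
  by rewrite coefD coefXn (leq_sizeP _ _ hq) ?addr0 ?gtn_eqF // ltnW.
split.
- case=> q [hq Hq]; have [b Hb] := span p n Hs q hq.
  exists b => j hj; apply/eqP; rewrite eq_sym -subr_eq0; apply/eqP.
  apply: (indep p n Hs (fun j => alpha j - (d n - d j) * b j) _ j hj); rewrite -key -Hb -diffop_DN ?sz // Hq subrr //.
- case=> beta Hb; exists (\sum_(j < n) beta j *: p j); split; first exact: (size_comb p beta n Hs).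
  apply/eqP; rewrite -subr_eq0 (diffop_DN _ n.+1) ?sz ?(size_comb p beta n Hs) // key; apply/eqP.
  by rewrite big1 // => j _; rewrite Hb // subrr scale0r.
Qed.
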